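(* There is no SLCS formula $\varphi$ such that for every neighbourhood model $\mathcal M$ with underlying space $(X,\mathcal N)$: $(X,\mathcal N)$ is connected if and only if $\mathcal M,x\models\varphi$ for every $x\in X$. (For any neighbourhood model $\mathcal M$, the model $\mathcal M'$ consisting of two disjoint, mutually unconnected copies of $\mathcal M$ admits a path preserving bisimulation with $\mathcal M$ relating each point of $\mathcal M$ to both of its copies.)
   Context: A neighbourhood space $(X,\mathcal N)$ assigns to each $x\in X$ a filter $\mathcal N(x)$ on $X$ (closed under finite intersections and supersets, not containing $\emptyset$) such that $x\in N$ for all $N\in\mathcal N(x)$. Closure: $\mathcal C(A)=\{x\mid\forall N\in\mathcal N(x): A\cap N\neq\emptyset\}$. Subsets $U,V$ are semi-separated if $\mathcal C(U)\cap V=U\cap\mathcal C(V)=\emptyset$; a set is connected if it is not the union of two non-empty semi-separated sets; the space is connected if $X$ is. Continuity: $f$ continuous iff $f^{-1}[N]\in\mathcal N_1(x)$ for all $N\in\mathcal N_2(f(x))$. An index space $(I,\mathcal N_I,\le,0)$ is a connected neighbourhood space with a linear order with least element $0$. A neighbourhood model $\mathcal M=((X,\mathcal N),\mathcal I,V)$ has an index space $\mathcal I$ and a valuation $V:X\to\mathcal P(\mathsf P)$ for a fixed countable set $\mathsf P$ of atoms; a path is a continuous $p:I\to X$. SLCS formulas: $\varphi::=a\mid\top\mid\neg\varphi\mid\varphi\wedge\varphi\mid\mathcal N\varphi\mid\varphi\,\mathcal R\,\varphi\mid\varphi\,\mathcal P\,\varphi$ with $a\in\mathsf P$. Semantics: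 $\mathcal M,x\models a$ iff $a\in V(x)$; Booleans as usual; $\mathcal M,x\models\mathcal N\varphi$ iff $x\in\mathcal C(\{y\mid\mathcal M,y\models\varphi\})$; $\mathcal M,x\models\varphi\,\mathcal R\,\psi$ iff there are a path $p$ and $n$ with $p(n)=x$, $\mathcal M,p(0)\models\psi$ and $\mathcal M,p(i)\models\varphi$ for all $0<i\le n$; $\mathcal M,x\models\varphi\,\mathcal P\,\psi$ iff there are a path $p$ with $p(0)=x$ and $n$ with $\mathcal M,p(n)\models\psi$ and $\mathcal M,p(i)\models\varphi$ for all $0\le i<n$. Path preserving bisimulation: for models $\mathcal M_1,\mathcal M_2$ over the same index space with path sets $\mathcal P_1,\mathcal P_2$, a triple $(Z_{\mathcal N},Z_1,Z_2)$, $\emptyset\ne Z_{\mathcal N}\subseteq X_1\times X_2$, $Z_1\subseteq(\mathcal P_1\times I)\times(\mathcal P_2\times I)$, $Z_2\subseteq(\mathcal P_2\times I)\times(\mathcal P_1\times I)$, such that: (1) at each pair $x_1Z_{\mathcal N}x_2$: $V_1(x_1)=V_2(x_2)$; for every $N_2\in\mathcal N_2(x_2)$ there is $N_1\in\mathcal N_1(x_1)$ with every $y_1\in N_1$ related to some $y_2\in N_2$; and symmetrically for every $N_1\in\mathcal N_1(x_1)$; (2) if $x_1Z_{\mathcal N}x_2$, $p(0)=x_1$, $n\ne0$, there are $q$ with $q(0)=x_2$ and $m$ with $p(n)Z_{\mathcal N}q(m)$, $(p,n)Z_1(q,m)$; (3) if $x_1Z_{\mathcal N}x_2$, $p(n)=x_1$,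 $n\ne0$, there are $q,m$ with $q(m)=x_2$, $p(0)Z_{\mathcal N}q(0)$, $(p,n)Z_1(q,m)$; (4) if $(p,n)Z_1(q,m)$ and $0<k_q<m$, there is $0<k_p<n$ with $p(k_p)Z_{\mathcal N}q(k_q)$; (5) if $x_1Z_{\mathcal N}x_2$, $q(0)=x_2$, $m\ne0$, there are $p$ with $p(0)=x_1$ and $n$ with $p(n)Z_{\mathcal N}q(m)$, $(q,m)Z_2(p,n)$; (6) if $x_1Z_{\mathcal N}x_2$, $q(m)=x_2$, $m\neq0$, there are $p,n$ with $p(n)=x_1$, $p(0)Z_{\mathcal N}q(0)$, $(q,m)Z_2(p,n)$; (7) if $(q,m)Z_2(p,n)$ and $0<k_p<n$, there is $0<k_q<m$ with $p(k_p)Z_{\mathcal N}q(k_q)$. *)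

(* Defs.v *)
Record nbhd_space (X : Type) : Type := NbhdSpace {
  nbhd : X -> (X -> Prop) -> Prop;
  nbhd_full : forall x, nbhd x (fun _ => True);
  nbhd_inter : forall x A B, nbhd x A -> nbhd x B -> nbhd x (fun y => A y /\ B y);
  nbhd_super : forall x A B, nbhd x A -> (forall y, A y -> B y) -> nbhd x B;
  nbhd_proper : forall x, ~ nbhd x (fun _ => False);
  nbhd_mem : forall x N, nbhd x N -> N x
}.
Arguments nbhd {X} _ _ _.

Definition closure {X : Type} (S : nbhd_space X) (A : X -> Prop) : X -> Prop :=
  fun x => forall N, nbhd S x N -> exists y, A y /\ N y.

Definition semi_separated {X : Type} (S : nbhd_space X) (U V : X -> Prop) : Prop :=
  (forall x, ~ (closure S U x /\ V x)) /\ (forall x, ~ (U x /\ closure S V x)).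

Definition connected_set {X : Type} (S : nbhd_space X) (A : X -> Prop) : Prop :=
  ~ exists U V : X -> Prop,
      (exists u, U u) /\ (exists v, V v) /\ semi_separated S U V /\
      (forall x, A x <-> U x \/ V x).

Definition connected_space {X : Type} (S : nbhd_space X) : Prop :=
  connected_set S (fun _ => True).

Definition continuous {X Y : Type} (S1 : nbhd_space X) (S2 : nbhd_space Y)
  (f : X -> Y) : Prop :=
  forall x N, nbhd S2 (f x) N -> nbhd S1 x (fun y => N (f y)).

Record index_space : Type := IndexSpace {
  I_car : Type;
  I_nbhd : nbhd_space I_car;
  I_le : I_car -> I_car -> Prop;
  I_le_refl : forall i, I_le i i;
  I_le_antisym : forall i j, I_le i j -> I_le j i -> i = j;
  I_le_trans : forall i j k, I_le i j -> I_le j k -> I_le i k;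
  I_le_total : forall i j, I_le i j \/ I_le j i;
  I_zero : I_car;
  I_zero_least : forall i, I_le I_zero i;
  I_connected : connected_space I_nbhd
}.

Definition I_lt (I : index_space) (i j : I_car I) : Prop := I_le I i j /\ i <> j.

Definition atom := nat.

Record nbhd_model : Type := NbhdModel {
  M_car : Type;
  M_space : nbhd_space M_car;
  M_index : index_space;
  M_val : M_car -> atom -> Prop
}.

Definition is_path (M : nbhd_model) (p : I_car (M_index M) -> M_car M) : Prop :=
  continuous (I_nbhd (M_index M)) (M_space M) p.

Inductive slcs : Type :=
| FAtom : atom -> slcs
| FTop : slcs
| FNeg : slcs -> slcs
| FAnd : slcs -> slcs -> slcs
| FNear : slcs -> slcs
| FReach : slcs -> slcs -> slcs
| FPass : slcs -> slcs -> slcs.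

Fixpoint sat (M : nbhd_model) (f : slcs) : M_car M -> Prop :=
  match f with
  | FAtom a => fun x => M_val M x a
  | FTop => fun _ => True
  | FNeg g => fun x => ~ sat M g x
  | FAnd g h => fun x => sat M g x /\ sat M h x
  | FNear g => fun x => closure (M_space M) (sat M g) x
  | FReach g h => fun x =>
      exists (p : I_car (M_index M) -> M_car M) (n : I_car (M_index M)),
        is_path M p /\ p n = x /\ sat M h (p (I_zero (M_index M))) /\
        (forall i, I_lt (M_index M) (I_zero (M_index M)) i ->
                   I_le (M_index M) i n -> sat M g (p i))
  | FPass g h => fun x =>
      exists (p : I_car (M_index M) -> M_car M) (n : I_car (M_index M)),
        is_path M p /\ p (I_zero (M_index M)) = x /\ sat M h (p n) /\
        (forall i, I_le (M_index M) (I_zero (M_index M)) i ->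
                   I_lt (M_index M) i n -> sat M g (p i))
  end.

(* Main.v *)
Require Import Defs.
From Stdlib Require Import Setoid.

Definition disc (X : Type) : nbhd_space X.
Proof.
  refine (@NbhdSpace X (fun x N => N x) _ _ _ _ _); simpl; auto.
Defined.

Definition unitI : index_space.
Proof.
  refine (@IndexSpace unit (disc unit) (fun _ _ => True) _ _ _ _ tt _ _); auto.
  - intros [] [] _ _; reflexivity.
  - intros [U [V [[u Hu] [[v Hv] [[H1 H2] _]]]]].
    destruct u, v. apply (H1 tt). split; auto.
    intros N HN. exists tt. simpl in HN. auto.
Defined.

Definition Mk (X : Type) : nbhd_model := NbhdModel X (disc X) unitI (fun _ _ => False).

Fixpoint ev (f : slcs) : Prop :=
  match f with
  | FAtom _ => False
  | FTop => True
  | FNeg g => ~ ev g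
  | FAnd g h => ev g /\ ev h
  | FNear g => ev g
  | FReach _ h => ev h
  | FPass _ h => ev h
  end.

Lemma sat_ev (X : Type) (phi : slcs) : forall x : X, sat (Mk X) phi x <-> ev phi.
Proof.
  induction phi; intro x; simpl.
  - tauto.
  - tauto.
  - rewrite (IHphi x). tauto.
  - rewrite (IHphi1 x), (IHphi2 x). tauto.
  - unfold closure; simpl. split.
    + intros H. destruct (H (fun y => y = x) eq_refl) as [y [Hy _]]. apply (IHphi y); auto.
    + intros H N HN. exists x. split; auto. apply IHphi; auto.
  - split.
    + intros [p [n [_ [Hn [Hh _]]]]]. destruct n. apply (IHphi2 (p tt)); auto.
    + intros H. exists (fun _ => x), tt. repeat split.
      * intros i N HN; exact HN.
      * apply IHphi2; auto.
      * intros i [_ Hi]. destruct i. congruence.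
  - split.
    + intros [p [n [_ [Hn [Hh _]]]]]. apply (IHphi2 (p n)); auto.
    + intros H. exists (fun _ => x), tt. repeat split.
      * intros i N HN; exact HN.
      * apply IHphi2; auto.
      * intros i _ [_ Hi]. destruct i. congruence.
Qed.

Theorem proposition21 :
  ~ exists phi : slcs,
      forall M : nbhd_model,
        connected_space (M_space M) <-> (forall x : M_car M, sat M phi x).
Proof.
  intros [phi H].
  assert (Hu : ev phi).
  { apply (sat_ev unit phi tt). apply (H (Mk unit)).
    exact (I_connected unitI). }
  assert (Hb : connected_space (M_space (Mk bool))).
  { apply H. intros x. apply sat_ev. exact Hu. }
  apply Hb. exists (fun b => b = true), (fun b => b = false).
  repeat split.
  - exists true; auto.
  - exists false; auto.
  - intros x [Hc Hx]. destruct (Hc (fun y => y = x) eq_refl) as [y [Hy Hyx]]. congruence.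
  - intros x [Hx Hc]. destruct (Hc (fun y => y = x) eq_refl) as [y [Hy Hyx]]. congruence.
  - intros _. destruct x; auto.
Qed.
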